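(* For every $\lambda>\lambda^*$, the function $F_\lambda(e)=F(\lambda,e)$ has exactly two roots in $I_\lambda$, both lying in $I_\lambda\cap(-\infty,0)$, and $e(\lambda)$ is the larger of the two, equivalently the root at which $\partial_eF(\lambda,\cdot)>0$.
   Context: Standing setup. Let $\gamma>0$; let $a_1,\dots,a_p>0$ with weights $\omega_i>0$, $\sum_i\omega_i=1$, and $b_1,\dots,b_n>0$ with weights $\pi_j>0$, $\sum_j\pi_j=1$; put $a^*=\max_i a_i$, $b^*=\max_j b_j$. Let $\mu$ be the limiting spectral distribution of $\mathbf{N}\mathbf{N}^T$ where $\mathbf{N}=\mathbf{A}^{1/2}\mathbf{G}\mathbf{B}^{1/2}$ is $k\times l$, $\mathbf{G}$ has iid mean-zero entries of variance $1/l$, $k/l\to\gamma$, and the spectral distributions of $\mathbf{A},\mathbf{B}$ converge to $\nu=\sum_i\omega_i\delta_{a_i}$ and $\underline{\nu}=\sum_j\pi_j\delta_{b_j}$. $\mu$ is a compactly supported probability measure on $[0,\infty)$; $\lambda^*>0$ is the right endpoint of its support, and $s(\lambda)=\int\frac{d\mu(t)}{t-\lambda}$ for $\lambda>\lambda^*$. Define $G(e)=\sum_{j=1}^n\frac{b_j\pi_j}{1+\gamma b_j e}$, $J=\{e: e>-1/(\gamma b^* )\}$, for $\lambda>0$, $I_\lambda=\{e\in J: G(e)<\lambda/a^*\}$, and $F(\lambda,e)=e-\sum_{i=1}^p\frac{a_i\omega_i}{a_iG(e)-\lambda}$. It is known (master equations) that there is a smooth real function $e(\lambda)$ on $(\lambda^*,\infty)$,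 never equal to a pole $-1/(\gamma b_j)$ of $G$ and with $a_iG(e(\lambda))\ne\lambda$, satisfying $s(\lambda)=\sum_{i=1}^p\frac{\omega_i}{a_iG(e(\lambda))-\lambda}$ and $F(\lambda,e(\lambda))=0$. *)

(* Defs.v *)
From Stdlib Require Import Reals.
Open Scope R_scope.

Fixpoint sumR (n : nat) (f : nat -> R) : R :=
  match n with
  | O => 0
  | S m => sumR m f + f m
  end.

Definition Gfun (gamma : R) (n : nat) (b pi : nat -> R) (e : R) : R :=
  sumR n (fun j => b j * pi j / (1 + gamma * b j * e)).

Definition Ffun (gamma : R) (p : nat) (a omega : nat -> R) (n : nat)
    (b pi : nat -> R) (lam e : R) : R :=
  e - sumR p (fun i => a i * omega i / (a i * Gfun gamma n b pi e - lam)).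

Definition in_J (gamma bstar e : R) : Prop := - / (gamma * bstar) < e.

Definition in_I (gamma : R) (n : nat) (b pi : nat -> R) (astar bstar lam e : R)
    : Prop :=
  in_J gamma bstar e /\ Gfun gamma n b pi e < lam / astar.

Definition is_max_of (n : nat) (f : nat -> R) (x : R) : Prop :=
  (exists i, (i < n)%nat /\ f i = x) /\ (forall i, (i < n)%nat -> f i <= x).

Definition cont_on (K : R) (f : R -> R) : Prop :=
  forall x, 0 <= x <= K -> continuity_pt f x.

(* mu is (integration against) a Borel probability measure concentrated on
   [0,K], represented (Riesz) as a normalised positive linear functional on
   functions continuous on [0,K], depending only on their values on [0,K]. *)
Record prob_measure_on (mu : (R -> R) -> R) (K : R) : Prop := {
  pm_add : forall f g, cont_on K f -> cont_on K g ->
             mu (fun x => f x + g x) = mu f + mu g;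
  pm_scal : forall c f, cont_on K f -> mu (fun x => c * f x) = c * mu f;
  pm_local : forall f g, cont_on K f -> cont_on K g ->
             (forall x, 0 <= x <= K -> f x = g x) -> mu f = mu g;
  pm_pos : forall f, cont_on K f -> (forall x, 0 <= x <= K -> 0 <= f x) ->
             0 <= mu f;
  pm_one : mu (fun _ => 1) = 1 }.

(* x lies in the (closed) support of mu: every nonnegative test function
   positive at x has positive integral *)
Definition in_support (mu : (R -> R) -> R) (K x : R) : Prop :=
  forall f, cont_on K f -> (forall y, 0 <= y <= K -> 0 <= f y) ->
    0 < f x -> 0 < mu f.

Definition stieltjes (mu : (R -> R) -> R) (lam : R) : R :=
  mu (fun t => / (t - lam)).

Definition smooth_on_ray (c : R) (e : R -> R) : Prop :=
  exists d : nat -> R -> R,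
    (forall x, c < x -> d O x = e x) /\
    (forall k x, c < x -> derivable_pt_lim (d k) x (d (S k) x)).

(* Main.v *)
Require Import Defs.
From Stdlib Require Import Reals Lra Lia Psatz.
From Coquelicot Require Import Coquelicot.
Open Scope R_scope.

Lemma sumR_ext n f g : (forall i, (i < n)%nat -> f i = g i) -> sumR n f = sumR n g.
Proof. induction n; simpl; intros H; auto. rewrite IHn by (intros; apply H; lia). rewrite H by lia. auto. Qed.

Lemma sumR_plus n f g : sumR n (fun i => f i + g i) = sumR n f + sumR n g.
Proof. induction n; simpl; [lra|rewrite IHn; lra]. Qed.

Lemma sumR_scal n c f : sumR n (fun i => c * f i) = c * sumR n f.
Proof. induction n; simpl; [lra|rewrite IHn; lra]. Qed.

Lemma sumR_le n f g : (forall i, (i < n)%nat -> f i <= g i) -> sumR n f <= sumR n g.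
Proof. induction n; simpl; intros H; [lra|]. assert (f n <= g n) by (apply H; lia).
 assert (sumR n f <= sumR n g) by (apply IHn; intros; apply H; lia). lra. Qed.

Lemma sumR_lt n f g : (0 < n)%nat -> (forall i, (i < n)%nat -> f i < g i) -> sumR n f < sumR n g.
Proof. intros Hn H. destruct n; [lia|]. simpl.
 assert (f n < g n) by (apply H; lia).
 assert (sumR n f <= sumR n g) by (apply sumR_le; intros; left; apply H; lia). lra. Qed.

Lemma sumR_zero n : sumR n (fun _ => 0) = 0.
Proof. induction n; simpl; [lra|rewrite IHn; lra]. Qed.

Lemma sumR_abs n f : Rabs (sumR n f) <= sumR n (fun i => Rabs (f i)).
Proof. induction n; simpl. rewrite Rabs_R0; lra.
 eapply Rle_trans. apply Rabs_triang. lra. Qed.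

Lemma sumR_derive n (g : nat -> R -> R) (dg : nat -> R) x :
  (forall i, (i < n)%nat -> is_derive (g i) x (dg i)) ->
  is_derive (fun y => sumR n (fun i => g i y)) x (sumR n dg).
Proof. induction n; simpl; intros H.
 - apply is_derive_Reals; apply derivable_pt_lim_const.
 - apply (is_derive_plus (fun y => sumR n (fun i => g i y)) (g n)).
   apply IHn; intros; apply H; lia. apply H; lia. Qed.

Lemma cpt_plus f g x : continuity_pt f x -> continuity_pt g x -> continuity_pt (fun y => f y + g y) x.
Proof. intros; apply (continuity_pt_plus f g); auto. Qed.
Lemma cpt_minus f g x : continuity_pt f x -> continuity_pt g x -> continuity_pt (fun y => f y - g y) x.
Proof. intros; apply (continuity_pt_minus f g); auto. Qed.
Lemma cpt_mult f g x : continuity_pt f x -> continuity_pt g x -> continuity_pt (fun y => f y * g y) x.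
Proof. intros; apply (continuity_pt_mult f g); auto. Qed.
Lemma cpt_inv f x : continuity_pt f x -> f x <> 0 -> continuity_pt (fun y => / f y) x.
Proof. intros; apply (continuity_pt_inv f); auto. Qed.
Lemma cpt_div f g x : continuity_pt f x -> continuity_pt g x -> g x <> 0 -> continuity_pt (fun y => f y / g y) x.
Proof. intros; unfold Rdiv; apply cpt_mult; auto; apply cpt_inv; auto. Qed.
Lemma cpt_const c x : continuity_pt (fun _ => c) x.
Proof. apply continuity_pt_const; intros ? ?; auto. Qed.
Lemma cpt_id x : continuity_pt (fun y => y) x.
Proof. apply continuity_pt_id. Qed.

Lemma sumR_cont n (g : nat -> R -> R) x :
  (forall i, (i < n)%nat -> continuity_pt (g i) x) ->
  continuity_pt (fun y => sumR n (fun i => g i y)) x.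
Proof. induction n; simpl; intros H. apply cpt_const.
 apply (cpt_plus (fun y => sumR n (fun i => g i y)) (g n)). apply IHn; intros; apply H; lia. apply H; lia. Qed.

Definition Gp gamma n (b pi : nat -> R) x :=
  - sumR n (fun j => gamma * b j * b j * pi j / (1 + gamma * b j * x)^2).
Definition Fp gamma p (a omega : nat -> R) n b pi lam x :=
  1 + sumR p (fun i => a i * a i * omega i * Gp gamma n b pi x / (a i * Gfun gamma n b pi x - lam)^2).

Lemma G_deriv gamma n b pi x : (forall j, (j < n)%nat -> 1 + gamma * b j * x <> 0) ->
  is_derive (Gfun gamma n b pi) x (Gp gamma n b pi x).
Proof. intros H. unfold Gp.
 replace (- sumR n (fun j => gamma * b j * b j * pi j / (1 + gamma * b j * x) ^ 2))
   with (sumR n (fun j => - (gamma * b j * b j * pi j / (1 + gamma * b j * x) ^ 2))).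
 2:{ rewrite <- (sumR_ext n (fun j => (-1) * (gamma * b j * b j * pi j / (1 + gamma * b j * x) ^ 2))).
     rewrite sumR_scal; ring. intros; ring. }
 apply (sumR_derive n (fun j y => b j * pi j / (1 + gamma * b j * y))).
 intros i Hi. specialize (H i Hi). auto_derive. auto. field. auto. Qed.

Lemma F_deriv gamma p a omega n b pi lam x :
  (forall j, (j < n)%nat -> 1 + gamma * b j * x <> 0) ->
  (forall i, (i < p)%nat -> a i * Gfun gamma n b pi x - lam <> 0) ->
  derivable_pt_lim (Ffun gamma p a omega n b pi lam) x (Fp gamma p a omega n b pi lam x).
Proof. intros H1 H2. unfold Ffun, Fp.
 replace (1 + sumR p (fun i => a i * a i * omega i * Gp gamma n b pi x / (a i * Gfun gamma n b pi x - lam) ^ 2))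
  with (1 - sumR p (fun i => - (a i * a i * omega i * Gp gamma n b pi x / (a i * Gfun gamma n b pi x - lam) ^ 2))).
 2:{ rewrite <- (sumR_ext p (fun i => (-1) * (a i * a i * omega i * Gp gamma n b pi x / (a i * Gfun gamma n b pi x - lam) ^ 2))).
     rewrite sumR_scal; ring. intros; ring. }
 apply (derivable_pt_lim_minus (fun y => y) (fun y => sumR p (fun i => a i * omega i / (a i * Gfun gamma n b pi y - lam)))). apply derivable_pt_lim_id.
 apply is_derive_Reals.
 apply (sumR_derive p (fun i y => a i * omega i / (a i * Gfun gamma n b pi y - lam))).
 intros i Hi. specialize (H2 i Hi).
 pose proof (G_deriv gamma n b pi x H1) as HG.
 assert (HC: is_derive (fun g => a i * omega i / (a i * g - lam)) (Gfun gamma n b pi x)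
   (- (a i * omega i * a i) / (a i * Gfun gamma n b pi x - lam) ^ 2)).
 { auto_derive. auto. field. auto. }
 pose proof (is_derive_comp _ _ _ _ _ HC HG) as HH.
 match type of HH with is_derive _ _ ?v => replace v with (- (a i * a i * omega i * Gp gamma n b pi x / (a i * Gfun gamma n b pi x - lam) ^ 2)) in HH end. exact HH. change (scal ?u ?w) with (u * w). field. auto. Qed.

Definition Setup gamma p (a omega : nat -> R) n (b pi : nat -> R) astar bstar :=
 0<gamma /\ (forall i, (i<p)%nat -> 0<a i) /\ (forall i, (i<p)%nat -> 0<omega i) /\
 sumR p omega = 1 /\ (forall j, (j<n)%nat -> 0<b j) /\ (forall j,(j<n)%nat -> 0<pi j) /\
 sumR n pi = 1 /\ is_max_of p a astar /\ is_max_of n b bstar.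

Ltac dsetup H := destruct H as (Hg & Ha & Hom & Hom1 & Hb & Hpi & Hpi1 & [[ka [Hka Hka']] Hamax] & [[kb [Hkb Hkb']] Hbmax]).

Lemma sumR_le_term n f k : (forall i, (i<n)%nat -> f i <= 0) -> (k < n)%nat -> sumR n f <= f k.
Proof. induction n; simpl; intros H Hk. lia.
 destruct (Nat.eq_dec k n). subst.
 assert (sumR n f <= 0). { rewrite <- (sumR_zero n). apply sumR_le. intros; apply H; lia. } lra.
 assert (sumR n f <= f k) by (apply IHn; [intros; apply H; lia | lia]). assert (f n <= 0) by (apply H; lia). lra. Qed.

Lemma sumR_ge_term n f k : (forall i, (i<n)%nat -> 0 <= f i) -> (k < n)%nat -> f k <= sumR n f.
Proof. intros H Hk. assert (sumR n (fun i => - f i) <= - f k).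
 apply (sumR_le_term n (fun i => - f i)); auto. intros; specialize (H i H0); lra.
 rewrite <- (sumR_ext n (fun i => (-1) * f i)) in H0 by (intros; ring). rewrite sumR_scal in H0. lra. Qed.

Lemma sumR_pos n f : (0<n)%nat -> (forall i, (i<n)%nat -> 0 < f i) -> 0 < sumR n f.
Proof. intros. rewrite <- (sumR_zero n). apply sumR_lt; auto. Qed.
Lemma sumR_neg n f : (0<n)%nat -> (forall i, (i<n)%nat -> f i < 0) -> sumR n f < 0.
Proof. intros. rewrite <- (sumR_zero n). apply sumR_lt; auto. Qed.

Lemma npos_of_sum n f : sumR n f = 1 -> (0 < n)%nat.
Proof. destruct n; simpl; intros; [lra|lia]. Qed.

Lemma div_lt_aux A u v D1 D2 : 0<A -> u<v -> v<0 -> 0<D1 -> D1<D2 -> A*u/D1 < A*v/D2.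
Proof. intros. replace (A*u/D1) with ((A*u*D2) * /(D1*D2)) by (field; repeat split; lra).
 replace (A*v/D2) with ((A*v*D1) * /(D1*D2)) by (field; repeat split; lra).
 apply Rmult_lt_compat_r. apply Rinv_0_lt_compat; nra. assert (u*D2 < u*D1) by nra. assert (u*D1 < v*D1) by nra. nra. Qed.

Lemma div_lt_aux2 c D1 D2 : 0<c -> 0<D1 -> D1<D2 -> c/D2 < c/D1.
Proof. intros. replace (c/D1) with ((c*D2) * /(D1*D2)) by (field; repeat split; lra).
 replace (c/D2) with ((c*D1) * /(D1*D2)) by (field; repeat split; lra).
 apply Rmult_lt_compat_r. apply Rinv_0_lt_compat; nra. nra. Qed.

Lemma dpl_cont f x l : derivable_pt_lim f x l -> continuity_pt f x.
Proof. intros H. apply (derivable_continuous_pt f x (exist _ l H)). Qed.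



Lemma bstar_pos gamma p a omega n b pi astar bstar : Setup gamma p a omega n b pi astar bstar -> 0 < bstar.
Proof. intros H; dsetup H. rewrite <- Hkb'. auto. Qed.
Lemma astar_pos gamma p a omega n b pi astar bstar : Setup gamma p a omega n b pi astar bstar -> 0 < astar.
Proof. intros H; dsetup H. rewrite <- Hka'. auto. Qed.

Lemma inJ_iff gamma bstar x : 0<gamma -> 0<bstar -> (in_J gamma bstar x <-> 0 < 1 + gamma*bstar*x).
Proof. intros. unfold in_J. assert (0<gamma*bstar) by nra.
 rewrite Ropp_inv_permute by lra. split; intros.
 - apply (Rmult_lt_compat_l (gamma*bstar)) in H2; auto.
   rewrite <- Ropp_inv_permute in H2 by lra. rewrite <- Ropp_mult_distr_r, Rinv_r in H2 by lra. lra.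
 - assert (- / (gamma*bstar) = (-1) * / (gamma*bstar)) by ring.
   rewrite <- Ropp_inv_permute by lra. rewrite H3.
   apply (Rmult_lt_reg_l (gamma*bstar)); auto. field_simplify; try lra. Qed.

Lemma J_pos gamma p a omega n b pi astar bstar x : Setup gamma p a omega n b pi astar bstar ->
  in_J gamma bstar x -> forall j, (j<n)%nat -> 0 < 1 + gamma * b j * x.
Proof. intros H Hx j Hj. pose proof (bstar_pos _ _ _ _ _ _ _ _ _ H). dsetup H.
 apply inJ_iff in Hx; auto. specialize (Hbmax j Hj). specialize (Hb j Hj).
 destruct (Rle_dec 0 x). nra. nra. Qed.

Section Fix.
End Fix.

Lemma G_pos gamma p a omega n b pi astar bstar x : Setup gamma p a omega n b pi astar bstar ->
  in_J gamma bstar x -> 0 < Gfun gamma n b pi x.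
Proof. intros H Hx. pose proof (J_pos _ _ _ _ _ _ _ _ _ x H Hx) as HJ. dsetup H.
 apply sumR_pos. eapply npos_of_sum; eauto. intros i Hi.
 specialize (HJ i Hi). specialize (Hb i Hi). specialize (Hpi i Hi).
 apply Rdiv_lt_0_compat; nra. Qed.

Lemma G_decr gamma p a omega n b pi astar bstar x y : Setup gamma p a omega n b pi astar bstar ->
  in_J gamma bstar x -> x < y -> Gfun gamma n b pi y < Gfun gamma n b pi x.
Proof. intros H Hx Hxy. pose proof (J_pos _ _ _ _ _ _ _ _ _ x H Hx) as HJ. dsetup H.
 apply sumR_lt. eapply npos_of_sum; eauto. intros i Hi.
 specialize (HJ i Hi). specialize (Hb i Hi). specialize (Hpi i Hi).
 apply div_lt_aux2; [nra|nra|]. assert (0<gamma*b i) by nra. nra. Qed.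

Lemma Gp_neg gamma p a omega n b pi astar bstar x : Setup gamma p a omega n b pi astar bstar ->
  in_J gamma bstar x -> Gp gamma n b pi x < 0.
Proof. intros H Hx. pose proof (J_pos _ _ _ _ _ _ _ _ _ x H Hx) as HJ. dsetup H. unfold Gp.
 cut (0 < sumR n (fun j => gamma * b j * b j * pi j / (1 + gamma * b j * x) ^ 2)). lra.
 apply sumR_pos. eapply npos_of_sum; eauto. intros i Hi.
 specialize (HJ i Hi). specialize (Hb i Hi). specialize (Hpi i Hi).
 assert (0<gamma*b i) by nra. assert (0<gamma*b i*b i) by nra.
 apply Rdiv_lt_0_compat; nra. Qed.

Lemma Gp_incr gamma p a omega n b pi astar bstar x y : Setup gamma p a omega n b pi astar bstar ->
  in_J gamma bstar x -> x < y -> Gp gamma n b pi x < Gp gamma n b pi y.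
Proof. intros H Hx Hxy. pose proof (J_pos _ _ _ _ _ _ _ _ _ x H Hx) as HJ. dsetup H. unfold Gp.
 cut (sumR n (fun j => gamma * b j * b j * pi j / (1 + gamma * b j * y) ^ 2) <
      sumR n (fun j => gamma * b j * b j * pi j / (1 + gamma * b j * x) ^ 2)). lra.
 apply sumR_lt. eapply npos_of_sum; eauto. intros i Hi.
 specialize (HJ i Hi). specialize (Hb i Hi). specialize (Hpi i Hi).
 assert (0<gamma*b i) by nra. assert (0<gamma*b i*b i) by nra.
 apply div_lt_aux2. nra. nra. assert (1 + gamma * b i * x < 1 + gamma * b i * y) by nra. nra. Qed.

Lemma inI_den gamma p a omega n b pi astar bstar lam x : Setup gamma p a omega n b pi astar bstar ->
  in_I gamma n b pi astar bstar lam x -> forall i, (i<p)%nat -> a i * Gfun gamma n b pi x - lam < 0.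
Proof. intros H [Hx HG] i Hi. pose proof (G_pos _ _ _ _ _ _ _ _ _ x H Hx).
 pose proof (astar_pos _ _ _ _ _ _ _ _ _ H). dsetup H. specialize (Hamax i Hi).
 assert (astar * Gfun gamma n b pi x < lam).
 { apply (Rmult_lt_compat_l astar) in HG; auto. field_simplify in HG; lra. }
 nra. Qed.

Lemma inI_up gamma p a omega n b pi astar bstar lam x z : Setup gamma p a omega n b pi astar bstar ->
  in_I gamma n b pi astar bstar lam x -> x <= z -> in_I gamma n b pi astar bstar lam z.
Proof. intros H [Hx HG] Hxz. split. unfold in_J in *; lra.
 destruct Hxz. pose proof (G_decr _ _ _ _ _ _ _ _ _ x z H Hx H0). lra. subst; auto. Qed.

Lemma F_deriv_I gamma p a omega n b pi astar bstar lam x : Setup gamma p a omega n b pi astar bstar ->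
  in_I gamma n b pi astar bstar lam x ->
  derivable_pt_lim (Ffun gamma p a omega n b pi lam) x (Fp gamma p a omega n b pi lam x).
Proof. intros H Hx. apply F_deriv.
 intros j Hj. pose proof (J_pos _ _ _ _ _ _ _ _ _ x H (proj1 Hx) j Hj). lra.
 intros i Hi. pose proof (inI_den _ _ _ _ _ _ _ _ _ lam x H Hx i Hi). lra. Qed.

Lemma F_gt gamma p a omega n b pi astar bstar lam x : Setup gamma p a omega n b pi astar bstar ->
  in_I gamma n b pi astar bstar lam x -> x < Ffun gamma p a omega n b pi lam x.
Proof. intros H Hx. pose proof (inI_den _ _ _ _ _ _ _ _ _ lam x H Hx) as HD. dsetup H. unfold Ffun.
 cut (sumR p (fun i => a i * omega i / (a i * Gfun gamma n b pi x - lam)) < 0). lra.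
 apply sumR_neg. eapply npos_of_sum; eauto. intros i Hi. specialize (HD i Hi).
 specialize (Ha i Hi); specialize (Hom i Hi). unfold Rdiv.
 apply Rmult_pos_neg. nra. apply Rinv_lt_0_compat; auto. Qed.

Lemma Fp_incr gamma p a omega n b pi astar bstar lam x y : Setup gamma p a omega n b pi astar bstar ->
  in_I gamma n b pi astar bstar lam x -> x < y ->
  Fp gamma p a omega n b pi lam x < Fp gamma p a omega n b pi lam y.
Proof. intros H Hx Hxy. pose proof (inI_den _ _ _ _ _ _ _ _ _ lam x H Hx) as HDx.
 pose proof (inI_den _ _ _ _ _ _ _ _ _ lam y H (inI_up _ _ _ _ _ _ _ _ _ _ _ _ H Hx (Rlt_le _ _ Hxy))) as HDy.
 pose proof (Gp_neg _ _ _ _ _ _ _ _ _ y H (proj1 (inI_up _ _ _ _ _ _ _ _ _ _ _ _ H Hx (Rlt_le _ _ Hxy)))) as Hgy.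
 pose proof (Gp_incr _ _ _ _ _ _ _ _ _ x y H (proj1 Hx) Hxy) as Hgi.
 pose proof (G_decr _ _ _ _ _ _ _ _ _ x y H (proj1 Hx) Hxy) as Hgd.
 dsetup H. unfold Fp. apply Rplus_lt_compat_l. apply sumR_lt. eapply npos_of_sum; eauto.
 intros i Hi. specialize (HDx i Hi). specialize (HDy i Hi).
 specialize (Ha i Hi); specialize (Hom i Hi). assert (a i * Gfun gamma n b pi y < a i * Gfun gamma n b pi x) by (apply Rmult_lt_compat_l; auto).
 assert (0 < a i * a i * omega i) by (repeat apply Rmult_lt_0_compat; auto).
 set (u := a i * Gfun gamma n b pi x - lam) in *. set (v := a i * Gfun gamma n b pi y - lam) in *.
 apply div_lt_aux; [auto|exact Hgi|exact Hgy| simpl; nra | simpl].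
 assert (v < u) by (unfold u, v; lra). nra. Qed.

Lemma F_lam gamma p a omega n b pi astar bstar lam lam' x : Setup gamma p a omega n b pi astar bstar ->
  in_I gamma n b pi astar bstar lam' x -> lam' < lam ->
  in_I gamma n b pi astar bstar lam x /\
  Ffun gamma p a omega n b pi lam x < Ffun gamma p a omega n b pi lam' x.
Proof. intros H Hx Hl. pose proof (inI_den _ _ _ _ _ _ _ _ _ lam' x H Hx) as HD.
 pose proof (astar_pos _ _ _ _ _ _ _ _ _ H) as Has.
 split. destruct Hx; split; auto. apply (Rlt_trans _ (lam'/astar)); auto.
 unfold Rdiv; apply Rmult_lt_compat_r; auto. apply Rinv_0_lt_compat; auto.
 dsetup H. unfold Ffun. apply Rplus_lt_compat_l. apply Ropp_lt_contravar. apply sumR_lt. eapply npos_of_sum; eauto.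
 intros i Hi. specialize (HD i Hi). specialize (Ha i Hi); specialize (Hom i Hi).
 set (g := Gfun gamma n b pi x) in *.
 replace (a i * omega i / (a i * g - lam')) with (- (a i * omega i) / (lam' - a i * g)) by (field; lra).
 replace (a i * omega i / (a i * g - lam)) with (- (a i * omega i) / (lam - a i * g)) by (field; lra).
 assert (a i * omega i / (lam - a i * g) < a i * omega i / (lam' - a i * g)) by (apply div_lt_aux2; nra).
 unfold Rdiv in *. lra. Qed.

Lemma F_mvt gamma p a omega n b pi astar bstar lam x y : Setup gamma p a omega n b pi astar bstar ->
  in_I gamma n b pi astar bstar lam x -> x < y ->
  exists c, x < c < y /\ Ffun gamma p a omega n b pi lam y - Ffun gamma p a omega n b pi lam x
    = Fp gamma p a omega n b pi lam c * (y - x).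
Proof. intros H Hx Hxy. destruct (MVT_cor2 (Ffun gamma p a omega n b pi lam) (Fp gamma p a omega n b pi lam) x y Hxy)
  as [c [Hc1 Hc2]]. intros c Hc. apply (F_deriv_I gamma p a omega n b pi astar bstar); auto.
  apply (inI_up gamma p a omega n b pi astar bstar lam x); auto; lra.
 exists c; split; auto. Qed.

Lemma F_cont gamma p a omega n b pi astar bstar lam x : Setup gamma p a omega n b pi astar bstar ->
  in_I gamma n b pi astar bstar lam x -> continuity_pt (Ffun gamma p a omega n b pi lam) x.
Proof. intros. eapply dpl_cont. eapply F_deriv_I; eauto. Qed.

Lemma crit_nonneg gamma p a omega n b pi astar bstar lam E : Setup gamma p a omega n b pi astar bstar ->
  in_I gamma n b pi astar bstar lam E -> Ffun gamma p a omega n b pi lam E = 0 ->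
  Fp gamma p a omega n b pi lam E = 0 ->
  forall x, in_I gamma n b pi astar bstar lam x -> 0 <= Ffun gamma p a omega n b pi lam x.
Proof. intros H HE HF HFp x Hx. destruct (Rtotal_order x E) as [Hl|[He|Hg]].
 - destruct (F_mvt _ _ _ _ _ _ _ _ _ lam x E H Hx Hl) as [c [Hc Heq]].
   assert (Fp gamma p a omega n b pi lam c < Fp gamma p a omega n b pi lam E).
   { apply (Fp_incr gamma p a omega n b pi astar bstar); auto. apply (inI_up gamma p a omega n b pi astar bstar lam x); auto; lra. lra. }
   nra.
 - subst; lra.
 - destruct (F_mvt _ _ _ _ _ _ _ _ _ lam E x H HE Hg) as [c [Hc Heq]].
   assert (Fp gamma p a omega n b pi lam E < Fp gamma p a omega n b pi lam c).
   { apply (Fp_incr gamma p a omega n b pi astar bstar); auto. lra. }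
   nra. Qed.

Lemma root_crit gamma p a omega n b pi astar bstar lam x y : Setup gamma p a omega n b pi astar bstar ->
  in_I gamma n b pi astar bstar lam x -> x < y ->
  Ffun gamma p a omega n b pi lam x = 0 -> Ffun gamma p a omega n b pi lam y = 0 ->
  exists c, x < c < y /\ Fp gamma p a omega n b pi lam c = 0.
Proof. intros H Hx Hxy Fx Fy. destruct (F_mvt _ _ _ _ _ _ _ _ _ lam x y H Hx Hxy) as [c [Hc Heq]].
 exists c; split; auto. rewrite Fx, Fy in Heq. assert (y - x <> 0) by lra.
 apply (Rmult_eq_reg_r (y-x)); auto. lra. Qed.

Lemma G_cont gamma p a omega n b pi astar bstar x : Setup gamma p a omega n b pi astar bstar ->
  in_J gamma bstar x -> continuity_pt (Gfun gamma n b pi) x.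
Proof. intros H Hx. eapply dpl_cont. apply is_derive_Reals. apply G_deriv.
 intros j Hj. pose proof (J_pos gamma p a omega n b pi astar bstar x H Hx j Hj). lra. Qed.

Lemma F_sum_bound gamma p a omega n b pi astar bstar lam x : Setup gamma p a omega n b pi astar bstar ->
  in_I gamma n b pi astar bstar lam x -> forall k, (k < p)%nat ->
  sumR p (fun i => a i * omega i / (a i * Gfun gamma n b pi x - lam))
   <= a k * omega k / (a k * Gfun gamma n b pi x - lam).
Proof. intros H Hx k Hk. pose proof (inI_den gamma p a omega n b pi astar bstar lam x H Hx) as HD.
 dsetup H. apply (sumR_le_term p (fun i => a i * omega i / (a i * Gfun gamma n b pi x - lam))); auto. intros i Hi. specialize (HD i Hi).
 specialize (Ha i Hi); specialize (Hom i Hi). unfold Rdiv.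
 assert (0 < a i * omega i) by nra. assert (/ (a i * Gfun gamma n b pi x - lam) < 0) by (apply Rinv_lt_0_compat; auto). nra. Qed.

Lemma exists_pos_left gamma p a omega n b pi astar bstar lam E : Setup gamma p a omega n b pi astar bstar ->
  in_I gamma n b pi astar bstar lam E -> Ffun gamma p a omega n b pi lam E = 0 ->
  exists z, z < E /\ in_I gamma n b pi astar bstar lam z /\ 0 < Ffun gamma p a omega n b pi lam z.
Proof. intros H HE HF.
 pose proof (bstar_pos _ _ _ _ _ _ _ _ _ H) as Hbs. pose proof (astar_pos _ _ _ _ _ _ _ _ _ H) as Has.
 pose proof H as H0. dsetup H0.
 assert (Hlam: 0 < lam). { pose proof (inI_den _ _ _ _ _ _ _ _ _ _ _ H HE ka Hka).
   pose proof (G_pos _ _ _ _ _ _ _ _ _ _ H (proj1 HE)). specialize (Ha ka Hka). nra. }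
 set (w := omega ka). assert (Hw: 0 < w) by (apply Hom; auto).
 set (delta := astar * w * gamma * bstar).
 assert (Hdel: 0 < delta) by (unfold delta; repeat apply Rmult_lt_0_compat; auto).
 set (GE := Gfun gamma n b pi E) in *.
 assert (HA: lam - astar * GE > delta / 2).
 { pose proof (F_sum_bound _ _ _ _ _ _ _ _ _ _ _ H HE ka Hka) as Hs.
   rewrite Hka' in Hs. fold w in Hs. fold GE in Hs. unfold Ffun in HF. fold GE in HF.
   assert (HEs: E <= astar * w / (astar * GE - lam)) by lra.
   pose proof (inI_den _ _ _ _ _ _ _ _ _ _ _ H HE ka Hka) as HD. rewrite Hka' in HD. fold GE in HD.
   pose proof (proj1 (inJ_iff gamma bstar E Hg Hbs) (proj1 HE)) as HJ.
   assert (HE0: E < 0). { pose proof (F_gt _ _ _ _ _ _ _ _ _ _ _ H HE) as Hq. unfold Ffun in Hq. fold GE in Hq. lra. }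
   destruct (Rlt_le_dec (delta/2) (lam - astar * GE)) as [Hlt|Hle]; [lra|exfalso].
   set (D := lam - astar*GE) in *.
   assert (HD': 0 < D) by (unfold D; lra).
   assert (E * D <= - (astar * w)).
   { replace (astar * w / (astar * GE - lam)) with (- (astar * w) / D) in HEs by (unfold D; field; lra).
     apply (Rmult_le_compat_r D) in HEs; [|lra]. unfold Rdiv in HEs. rewrite Rmult_assoc, Rinv_l in HEs by lra. lra. }
   assert (E * (delta/2) <= E * D) by nra.
   unfold delta in *. assert (0 < astar * w) by nra.
   assert (E * gamma * bstar / 2 * (astar * w) <= -1 * (astar * w)) by nra.
   apply Rmult_le_reg_r in H3; auto. nra. }
 set (pk := pi kb). assert (Hpk: 0 < pk) by (apply Hpi; auto).
 pose proof (proj1 (inJ_iff gamma bstar E Hg Hbs) (proj1 HE)) as HJE.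
 set (t := Rmin (astar * bstar * pk / lam) ((1 + gamma * bstar * E) / 2)).
 assert (Ht0: 0 < t). { unfold t. apply Rmin_glb_lt. apply Rdiv_lt_0_compat; auto. repeat apply Rmult_lt_0_compat; auto. lra. }
 set (x1 := (t - 1) / (gamma * bstar)).
 assert (Hx1t: 1 + gamma * bstar * x1 = t) by (unfold x1; field; split; lra).
 assert (Hx1J: in_J gamma bstar x1) by (apply inJ_iff; auto; lra).
 assert (Hx1E: x1 < E).
 { assert (t < 1 + gamma*bstar*E) by (unfold t; eapply Rle_lt_trans; [apply Rmin_r|lra]).
   assert (gamma * bstar * x1 < gamma*bstar*E) by lra. assert (0 < gamma*bstar) by nra.
   apply (Rmult_lt_reg_l (gamma*bstar)); auto. }
 assert (HG1: lam <= astar * Gfun gamma n b pi x1).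
 { pose proof (J_pos _ _ _ _ _ _ _ _ _ x1 H Hx1J) as HJ.
   assert (bstar * pk / t <= Gfun gamma n b pi x1).
   { unfold Gfun. pose proof (sumR_ge_term n (fun j => b j * pi j / (1 + gamma * b j * x1)) kb) as Hq.
     simpl in Hq. rewrite Hkb' in Hq. fold pk in Hq. rewrite <- Hx1t. apply Hq; auto.
     intros i Hi. specialize (HJ i Hi). specialize (Hb i Hi). specialize (Hpi i Hi).
     left; apply Rdiv_lt_0_compat; nra. }
   assert (t <= astar * bstar * pk / lam) by (unfold t; apply Rmin_l).
   assert (t * lam <= astar * bstar * pk).
   { apply (Rmult_le_compat_r lam) in H1; [|lra]. unfold Rdiv in H1. rewrite Rmult_assoc, Rinv_l in H1 by lra. lra. }
   assert (astar * (bstar * pk / t) = astar * bstar * pk / t) by (field; lra).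
   assert (lam <= astar * bstar * pk / t).
   { apply (Rmult_le_reg_r t); auto. unfold Rdiv. rewrite Rmult_assoc, Rinv_l by lra. lra. }
   nra. }
 set (h := fun x => (lam - delta/2) - astar * Gfun gamma n b pi x).
 destruct (Ranalysis5.IVT_interv h x1 E) as [z [Hz Hhz]].
 { intros c Hc. unfold h. apply cpt_minus; [apply cpt_const|].
   apply cpt_mult; [apply cpt_const|]. apply (G_cont gamma p a omega n b pi astar bstar); auto.
   unfold in_J in *; lra. }
 auto. unfold h; fold GE; lra. unfold h; fold GE; lra.
 assert (HzE: z < E). { destruct Hz as [_ [Hz|Hz]]; auto. subst. unfold h in Hhz. fold GE in Hhz. lra. }
 assert (HzI: in_I gamma n b pi astar bstar lam z).
 { split. unfold in_J in *; lra. unfold h in Hhz.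
   apply (Rmult_lt_reg_l astar); auto. field_simplify; lra. }
 exists z. split; auto. split; auto.
 pose proof (F_sum_bound _ _ _ _ _ _ _ _ _ _ _ H HzI ka Hka) as Hs. rewrite Hka' in Hs. fold w in Hs.
 unfold h in Hhz. replace (astar * Gfun gamma n b pi z - lam) with (- (delta/2)) in Hs by lra.
 unfold Ffun. unfold delta in Hs.
 replace (astar * w / - (astar * w * gamma * bstar / 2)) with (- 2 / (gamma * bstar)) in Hs.
 2:{ field. repeat split; lra. }
 pose proof (proj1 (inJ_iff gamma bstar z Hg Hbs) (proj1 HzI)) as HJz.
 assert (0 < gamma * bstar) by nra.
 assert (z * (gamma * bstar) + 2 > 0) by nra.
 assert (z + 2 / (gamma*bstar) > 0).
 { replace (z + 2 / (gamma*bstar)) with ((z * (gamma * bstar) + 2) / (gamma*bstar)) by (field; lra).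
   apply Rdiv_lt_0_compat; lra. }
 unfold Rdiv in *. lra. Qed.

Lemma two_roots gamma p a omega n b pi astar bstar lam E : Setup gamma p a omega n b pi astar bstar ->
  in_I gamma n b pi astar bstar lam E -> Ffun gamma p a omega n b pi lam E = 0 ->
  0 < Fp gamma p a omega n b pi lam E ->
  exists r1 d1, r1 < E /\ E < 0 /\ in_I gamma n b pi astar bstar lam r1 /\
    Ffun gamma p a omega n b pi lam r1 = 0 /\
    (forall r, in_I gamma n b pi astar bstar lam r -> Ffun gamma p a omega n b pi lam r = 0 -> r = r1 \/ r = E) /\
    derivable_pt_lim (fun x => Ffun gamma p a omega n b pi lam x) r1 d1 /\ d1 <= 0.
Proof. intros H HE HF HFp.
 set (F := Ffun gamma p a omega n b pi lam) in *. set (Fq := Fp gamma p a omega n b pi lam) in *.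
 assert (HE0: E < 0). { pose proof (F_gt _ _ _ _ _ _ _ _ _ _ _ H HE). fold F in H0. lra. }
 destruct (exists_pos_left _ _ _ _ _ _ _ _ _ _ _ H HE HF) as [z [HzE [HzI HFz]]]. fold F in HFz.
 pose proof (F_deriv_I _ _ _ _ _ _ _ _ _ _ _ H HE) as Hd. fold F Fq in Hd.
 destruct (Hd (Fq E / 2)) as [del Hdel]. lra.
 set (hh := - Rmin (del/2) ((E - z)/2)).
 assert (Hh1: hh < 0). { unfold hh. assert (0 < Rmin (del/2) ((E-z)/2)). apply Rmin_glb_lt.
   pose proof (cond_pos del); lra. lra. lra. }
 assert (Hh2: E - z > - hh). { unfold hh. assert (Rmin (del/2) ((E-z)/2) <= (E-z)/2) by apply Rmin_r. lra. }
 assert (Hh3: Rabs hh < del). { rewrite Rabs_left by lra. unfold hh. assert (Rmin (del/2) ((E-z)/2) <= del/2) by apply Rmin_l.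
   pose proof (cond_pos del). lra. }
 specialize (Hdel hh ltac:(lra) Hh3). rewrite HF in Hdel.
 assert (HFy: F (E + hh) < 0).
 { apply Rabs_def2 in Hdel. destruct Hdel as [_ Hq].
   assert (Fq E / 2 < (F (E + hh) - 0) / hh) by lra.
   assert (0 < (F (E+hh) - 0)/hh) by lra.
   unfold Rdiv in H1. rewrite Rminus_0_r in H1.
   assert (/ hh < 0) by (apply Rinv_lt_0_compat; auto). nra. }
 set (y0 := E + hh) in *.
 assert (Hzy: z < y0) by (unfold y0; lra).
 destruct (Ranalysis5.IVT_interv (fun x => - F x) z y0) as [r1 [Hr1 HFr1]].
 { intros c Hc. apply (continuity_pt_opp F). apply (F_cont _ _ _ _ _ _ _ astar bstar); auto.
   apply (inI_up gamma p a omega n b pi astar bstar lam z); auto; lra. }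
 auto. lra. lra.
 assert (HF1: F r1 = 0) by lra.
 assert (Hr1z: z < r1). { destruct Hr1 as [[Hq|Hq] _]; auto. subst. lra. }
 assert (Hr1I: in_I gamma n b pi astar bstar lam r1).
 { apply (inI_up gamma p a omega n b pi astar bstar lam z); auto; lra. }
 assert (Hr1E: r1 < E) by (unfold y0 in Hr1; lra).
 destruct (root_crit _ _ _ _ _ _ _ _ _ _ _ _ H Hr1I Hr1E HF1 HF) as [c [Hc HFc]]. fold Fq in HFc.
 assert (Hq1: Fq r1 < Fq c) by (apply (Fp_incr gamma p a omega n b pi astar bstar); auto; lra).
 exists r1, (Fq r1). split; auto. split; auto. split; auto. split; auto. split.
 2:{ split. apply (F_deriv_I gamma p a omega n b pi astar bstar); auto. lra. }
 intros r HrI HFr. fold F in HFr.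
 destruct (Rtotal_order r E) as [HrE|[HrE|HrE]]; [|right; auto|].
 - destruct (Rtotal_order r r1) as [Hrr|[Hrr|Hrr]]; [|left; auto|]; exfalso.
   + destruct (root_crit _ _ _ _ _ _ _ _ _ _ _ _ H HrI Hrr HFr HF1) as [c1 [Hc1 HFc1]].
     assert (Hlt: Fp gamma p a omega n b pi lam c1 < Fp gamma p a omega n b pi lam c).
     { apply (Fp_incr gamma p a omega n b pi astar bstar); auto.
       apply (inI_up gamma p a omega n b pi astar bstar lam r); auto; lra. lra. }
     unfold Fq in *. lra.
   + destruct (root_crit _ _ _ _ _ _ _ _ _ _ _ _ H Hr1I Hrr HF1 HFr) as [c1 [Hc1 HFc1]].
     destruct (root_crit _ _ _ _ _ _ _ _ _ _ _ _ H HrI HrE HFr HF) as [c2 [Hc2 HFc2]].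
     assert (Fp gamma p a omega n b pi lam c1 < Fp gamma p a omega n b pi lam c2).
     { apply (Fp_incr gamma p a omega n b pi astar bstar); auto.
       apply (inI_up gamma p a omega n b pi astar bstar lam r1); auto; lra. lra. }
     unfold Fq in *. lra.
 - exfalso. destruct (root_crit _ _ _ _ _ _ _ _ _ _ _ _ H HE HrE HF HFr) as [c1 [Hc1 HFc1]].
   assert (Fq E < Fp gamma p a omega n b pi lam c1).
   { apply (Fp_incr gamma p a omega n b pi astar bstar); auto. lra. }
   unfold Fq in *. lra. Qed.

Lemma mu_bound mu K lam : 0 < K -> K < lam -> prob_measure_on mu K ->
  Rabs (1 + lam * stieltjes mu lam) <= K / (lam - K).
Proof. intros HK Hl Hmu. destruct Hmu as [Hadd Hsc Hloc Hpos Hone].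
 set (f := fun t => / (t - lam)).
 assert (Cf: cont_on K f). { intros x Hx. unfold f. apply cpt_inv. apply cpt_minus; [apply cpt_id|apply cpt_const]. lra. }
 assert (Clf: cont_on K (fun x => lam * f x)). { intros x Hx. apply cpt_mult; [apply cpt_const|apply Cf; auto]. }
 assert (C1: cont_on K (fun _ => 1)). { intros x Hx. apply cpt_const. }
 set (g := fun x => 1 + lam * f x).
 assert (Cg: cont_on K g). { intros x Hx. unfold g. apply cpt_plus; [apply cpt_const|apply Clf; auto]. }
 assert (Hmg: mu g = 1 + lam * stieltjes mu lam).
 { unfold g. rewrite (Hadd (fun _ => 1) (fun x => lam * f x)); auto. rewrite Hone.
   rewrite (Hsc lam f); auto. }
 set (c := K / (lam - K)).
 assert (Hc: 0 < c) by (unfold c; apply Rdiv_lt_0_compat; lra).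
 assert (Hgb: forall t, 0 <= t <= K -> - c <= g t <= 0).
 { intros t Ht. unfold g, f, c. replace (1 + lam * / (t - lam)) with (- (t / (lam - t))) by (field; lra).
   split. apply Ropp_le_contravar. unfold Rdiv.
   apply Rmult_le_compat; try lra. left; apply Rinv_0_lt_compat; lra.
   apply Rinv_le_contravar; lra.
   assert (0 <= t / (lam - t)) by (apply Rdiv_le_0_compat; lra). lra. }
 assert (H1: 0 <= mu (fun x => -1 * g x)).
 { apply Hpos. intros x Hx. apply cpt_mult; [apply cpt_const|apply Cg; auto].
   intros y Hy. specialize (Hgb y Hy). lra. }
 rewrite (Hsc (-1) g) in H1; auto.
 assert (H2: 0 <= mu (fun x => g x + c * 1)).
 { apply Hpos. intros x Hx. apply cpt_plus; [apply Cg; auto|apply cpt_const].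
   intros y Hy. specialize (Hgb y Hy). lra. }
 rewrite (Hadd g (fun _ => c * 1)) in H2; auto. 2:{ intros x Hx; apply cpt_const. }
 rewrite (Hsc c (fun _ => 1)) in H2; auto. rewrite Hone in H2.
 fold c. rewrite <- Hmg. apply Rabs_le. lra. Qed.

Lemma GE_identity gamma p a omega n b pi astar bstar lam E s : Setup gamma p a omega n b pi astar bstar ->
  (forall i, (i<p)%nat -> a i * Gfun gamma n b pi E <> lam) ->
  Ffun gamma p a omega n b pi lam E = 0 ->
  s = sumR p (fun i => omega i / (a i * Gfun gamma n b pi E - lam)) ->
  Gfun gamma n b pi E * E = 1 + lam * s.
Proof. intros H HD HF Hs. dsetup H. set (g := Gfun gamma n b pi E) in *.
 unfold Ffun in HF. fold g in HF.
 assert (HE: E = sumR p (fun i => a i * omega i / (a i * g - lam))) by lra.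
 rewrite HE, <- sumR_scal, Hs, <- sumR_scal, <- Hom1, <- sumR_plus.
 apply sumR_ext. intros i Hi. specialize (HD i Hi). field. lra. Qed.

Lemma e_bound gamma p a omega n b pi astar bstar lam E : Setup gamma p a omega n b pi astar bstar ->
  0 < lam ->
  (forall i, (i<p)%nat -> a i * Gfun gamma n b pi E <> lam) ->
  Ffun gamma p a omega n b pi lam E = 0 ->
  Rabs (Gfun gamma n b pi E * E) <= 1 ->
  Rabs E <= 2 * astar / lam.
Proof. intros H Hl HD HF HGE. pose proof (astar_pos _ _ _ _ _ _ _ _ _ H) as Has. dsetup H.
 set (g := Gfun gamma n b pi E) in *. unfold Ffun in HF. fold g in HF.
 destruct (Rle_lt_dec (Rabs g) (lam / (2 * astar))) as [Hs|Hbig].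
 - assert (HE: E = sumR p (fun i => a i * omega i / (a i * g - lam))) by lra.
   rewrite HE. eapply Rle_trans. apply sumR_abs.
   eapply Rle_trans. apply (sumR_le p _ (fun i => (2 * astar / lam) * omega i)).
   + intros i Hi. specialize (Ha i Hi); specialize (Hom i Hi); specialize (Hamax i Hi).
     assert (Hd: lam / 2 <= Rabs (a i * g - lam)).
     { assert (Rabs (a i * g) <= lam / 2).
       { rewrite Rabs_mult, Rabs_pos_eq by lra.
         apply (Rmult_le_compat_l (a i)) in Hs; [|lra].
         eapply Rle_trans. apply Hs. replace (a i * (lam / (2*astar))) with ((a i / astar) * (lam/2)) by (field; lra).
         assert (a i / astar <= 1). { apply (Rmult_le_reg_r astar); auto. field_simplify; lra. }
         assert (0 <= lam/2) by lra. nra. }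
       pose proof (Rabs_triang_inv lam (a i * g)). rewrite Rabs_pos_eq in H0 by lra.
       rewrite Rabs_minus_sym. lra. }
     rewrite Rabs_div. 2:{ intro Hq. assert (Rabs (a i * g - lam) = 0) by (rewrite Hq; apply Rabs_R0). lra. }
     rewrite Rabs_pos_eq by nra.
     unfold Rdiv. rewrite Rmult_assoc.
     replace (2 * astar * / lam * omega i) with (astar * (omega i * (2 / lam))) by (field; lra).
     apply Rmult_le_compat; try lra. apply Rmult_le_pos; try lra. left; apply Rinv_0_lt_compat.
     apply Rlt_le_trans with (lam/2); lra.
     apply Rmult_le_compat_l; [lra|].
     replace (2 / lam) with (/ (lam/2)) by (field; lra). apply Rinv_le_contravar; lra.
   + rewrite sumR_scal, Hom1. lra.
 - assert (Hg0: 0 < Rabs g) by (assert (0 < lam / (2*astar)) by (apply Rdiv_lt_0_compat; lra); lra).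
   rewrite Rabs_mult in HGE.
   assert (Rabs E <= / Rabs g).
   { apply (Rmult_le_reg_l (Rabs g)); auto. rewrite Rinv_r by lra. lra. }
   assert (/ Rabs g < / (lam / (2*astar))).
   { apply Rinv_lt_contravar; auto. apply Rmult_lt_0_compat; auto. apply Rdiv_lt_0_compat; lra. }
   replace (2 * astar / lam) with (/ (lam / (2*astar))) by (field; lra). lra. Qed.

Lemma large_good gamma p a omega n b pi astar bstar lam E : Setup gamma p a omega n b pi astar bstar ->
  4 * gamma * astar * bstar <= lam ->
  2 * astar * bstar + 2 * astar * bstar * (gamma + 1) <= lam ->
  Rabs E <= 2 * astar / lam ->
  in_I gamma n b pi astar bstar lam E /\ 0 < Fp gamma p a omega n b pi lam E.
Proof. intros H Hl1 Hl2 HE.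
 pose proof (astar_pos _ _ _ _ _ _ _ _ _ H) as Has. pose proof (bstar_pos _ _ _ _ _ _ _ _ _ H) as Hbs.
 pose proof H as H0. dsetup H0.
 assert (Hlam: 0 < lam). { assert (0 < 4*gamma*astar*bstar) by (repeat apply Rmult_lt_0_compat; lra). lra. }
 set (r := 1 / (2 * gamma * bstar)).
 assert (Hr: 2 * astar / lam <= r).
 { unfold r. apply (Rmult_le_reg_r (lam * (2*gamma*bstar))). apply Rmult_lt_0_compat; nra.
   field_simplify; try lra; try nra. }
 assert (HEr: - r <= E <= r). { pose proof (Rle_abs E). pose proof (Rle_abs (-E)). rewrite Rabs_Ropp in H1. lra. }
 assert (Hgr: gamma * bstar * r = 1/2) by (unfold r; field; lra).
 assert (HD: forall j, (j<n)%nat -> 1/2 <= 1 + gamma * b j * E).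
 { intros j Hj. specialize (Hb j Hj). specialize (Hbmax j Hj).
   assert (gamma * b j * r <= 1/2) by (rewrite <- Hgr; assert (0 <= r) by (unfold r; apply Rlt_le; apply Rdiv_lt_0_compat; nra); assert (gamma*b j <= gamma*bstar) by nra; nra).
   assert (0 < gamma * b j) by nra. nra. }
 assert (HJ: in_J gamma bstar E). { apply inJ_iff; auto. rewrite <- Hkb'. specialize (HD kb Hkb). lra. }
 assert (HG0: 0 < Gfun gamma n b pi E) by (apply (G_pos gamma p a omega n b pi astar bstar); auto).
 assert (HG2: Gfun gamma n b pi E <= 2 * bstar).
 { unfold Gfun. replace (2*bstar) with (sumR n (fun j => 2*bstar*pi j)) by (rewrite sumR_scal, Hpi1; ring). apply sumR_le.
   intros j Hj. specialize (HD j Hj). specialize (Hb j Hj). specialize (Hbmax j Hj). specialize (Hpi j Hj).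
   apply (Rmult_le_reg_r (1 + gamma * b j * E)). lra. replace (b j * pi j / (1 + gamma * b j * E) * (1 + gamma * b j * E)) with (b j * pi j) by (field; lra).
   assert (b j * pi j <= bstar * pi j) by nra. assert (0 < bstar * pi j) by nra. assert (0 <= bstar * pi j * ((1 + gamma * b j * E) - 1/2)) by (apply Rmult_le_pos; lra). nra. }
 assert (HaG: astar * Gfun gamma n b pi E < lam).
 { assert (astar * Gfun gamma n b pi E <= 2*astar*bstar) by nra.
   assert (0 < 2 * astar * bstar * (gamma+1)) by (repeat apply Rmult_lt_0_compat; lra). lra. }
 assert (HI: in_I gamma n b pi astar bstar lam E).
 { split; auto. apply (Rmult_lt_reg_l astar); auto. field_simplify; lra. }
 split; auto.
 set (M := 2 * astar * bstar * (gamma + 1)).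
 assert (HM: 0 < M) by (unfold M; repeat apply Rmult_lt_0_compat; lra).
 set (u := - Gp gamma n b pi E).
 assert (Hu0: 0 <= u). { pose proof (Gp_neg gamma p a omega n b pi astar bstar E H HJ). unfold u; lra. }
 assert (Hu: u <= 4 * gamma * bstar * bstar).
 { unfold u, Gp. rewrite Ropp_involutive. replace (4 * gamma * bstar * bstar) with (sumR n (fun j => 4 * gamma * bstar * bstar * pi j)) by (rewrite sumR_scal, Hpi1; ring). apply sumR_le.
   intros j Hj. specialize (HD j Hj). specialize (Hb j Hj). specialize (Hbmax j Hj). specialize (Hpi j Hj).
   assert (HDq: 1/4 <= (1 + gamma * b j * E)^2) by (simpl; nra).
   apply (Rmult_le_reg_r ((1 + gamma * b j * E)^2)). lra.
   unfold Rdiv. rewrite Rmult_assoc, Rinv_l by lra. rewrite Rmult_1_r.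
   assert (b j * b j <= bstar * bstar) by nra.
   assert (gamma * b j * b j * pi j <= gamma * bstar * bstar * pi j).
   { replace (gamma * b j * b j * pi j) with ((gamma*pi j) * (b j * b j)) by ring.
     replace (gamma * bstar * bstar * pi j) with ((gamma*pi j) * (bstar * bstar)) by ring.
     apply Rmult_le_compat_l; nra. }
   assert (0 <= gamma * bstar * bstar * pi j) by (repeat apply Rmult_le_pos; lra).
   nra. }
 set (K := astar * astar * (4 * gamma * bstar * bstar) / (M * M)).
 assert (HK: K < 1).
 { assert (HMM: 0 < M*M) by nra. unfold K. apply (Rmult_lt_reg_r (M*M)); auto.
   replace (astar * astar * (4 * gamma * bstar * bstar) / (M * M) * (M * M)) with (astar * astar * (4 * gamma * bstar * bstar)) by (field; lra).
   rewrite Rmult_1_l. unfold M.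
   assert (HQ: 0 < astar * astar * bstar * bstar) by (repeat apply Rmult_lt_0_compat; lra).
   replace (2 * astar * bstar * (gamma + 1) * (2 * astar * bstar * (gamma + 1))) with (4 * (astar * astar * bstar * bstar) * ((gamma+1)*(gamma+1))) by ring.
   replace (astar * astar * (4 * gamma * bstar * bstar)) with (4 * (astar * astar * bstar * bstar) * gamma) by ring.
   apply Rmult_lt_compat_l. lra. nra. }
 unfold Fp. fold u.
 assert (sumR p (fun i => a i * a i * omega i * Gp gamma n b pi E / (a i * Gfun gamma n b pi E - lam) ^ 2) >= - K).
 { replace (-K) with (sumR p (fun i => -K * omega i)) by (rewrite sumR_scal, Hom1; ring). apply Rle_ge. apply sumR_le.
   intros i Hi. specialize (Ha i Hi); specialize (Hom i Hi); specialize (Hamax i Hi).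
   set (D := lam - a i * Gfun gamma n b pi E).
   assert (HDM: M <= D).
   { unfold D. assert (a i * Gfun gamma n b pi E <= astar * Gfun gamma n b pi E) by nra.
     assert (astar * Gfun gamma n b pi E <= 2*astar*bstar) by nra. unfold M in *. lra. }
   replace ((a i * Gfun gamma n b pi E - lam) ^ 2) with (D * D) by (unfold D; ring).
   replace (Gp gamma n b pi E) with (- u) by (unfold u; ring).
   assert (a i * a i * u / (D*D) <= K).
   { unfold K. unfold Rdiv. apply Rmult_le_compat.
     repeat apply Rmult_le_pos; lra. left; apply Rinv_0_lt_compat; nra.
     apply Rmult_le_compat; try nra. apply Rinv_le_contravar; nra. }
   replace (a i * a i * omega i * - u / (D * D)) with (- (omega i * (a i * a i * u / (D * D)))) by (field; nra).
   nra. }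
 lra. Qed.

Lemma sign_persist (f : R -> R) c x0 : (forall x, c < x -> continuity_pt f x) ->
  (forall x, c < x -> f x <> 0) -> c < x0 -> 0 < f x0 -> forall x, c < x -> 0 < f x.
Proof. intros Hc Hnz Hx0 Hf0 x Hx. destruct (Rlt_le_dec 0 (f x)) as [Hp|Hn]; auto. exfalso.
 assert (Hneg: f x < 0) by (destruct Hn; auto; exfalso; apply (Hnz x Hx); auto).
 destruct (Rtotal_order x x0) as [Hl|[He|Hg]].
 - destruct (Ranalysis5.IVT_interv f x x0) as [z [Hz Hfz]]; auto.
   intros a Ha. apply Hc. lra. apply (Hnz z); auto. lra.
 - subst. lra.
 - destruct (Ranalysis5.IVT_interv (fun y => - f y) x0 x) as [z [Hz Hfz]]; auto.
   intros a Ha. apply (continuity_pt_opp f). apply Hc. lra. lra. lra.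
   apply (Hnz z). lra. lra. Qed.

Lemma cpt_sq f x : continuity_pt f x -> continuity_pt (fun y => f y ^ 2) x.
Proof. intros H. change (continuity_pt (fun y => f y * (f y * 1)) x).
 apply cpt_mult; auto. apply cpt_mult; auto. apply cpt_const. Qed.

Lemma cont_G_nz gamma n b pi x : (forall j, (j<n)%nat -> 1 + gamma * b j * x <> 0) ->
  continuity_pt (Gfun gamma n b pi) x.
Proof. intros H. eapply dpl_cont. apply is_derive_Reals. apply G_deriv; auto. Qed.

Lemma cont_Gp_nz gamma n b pi x : (forall j, (j<n)%nat -> 1 + gamma * b j * x <> 0) ->
  continuity_pt (Gp gamma n b pi) x.
Proof. intros H. unfold Gp. apply (continuity_pt_opp (fun x => sumR n (fun j => gamma * b j * b j * pi j / (1 + gamma * b j * x) ^ 2))).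
 apply (sumR_cont n (fun j x => gamma * b j * b j * pi j / (1 + gamma * b j * x) ^ 2)).
 intros i Hi. apply cpt_div. apply cpt_const. apply cpt_sq. apply cpt_plus. apply cpt_const.
 apply cpt_mult. apply cpt_const. apply cpt_id. specialize (H i Hi).
 apply pow_nonzero. auto. Qed.

Theorem mainTheorem15
  (gamma : R) (p n : nat) (a omega b pi : nat -> R) (astar bstar : R)
  (mu : (R -> R) -> R) (lamstar : R) (e : R -> R)
  (* standing setup *)
  (Hgamma : 0 < gamma)
  (Ha : forall i, (i < p)%nat -> 0 < a i)
  (Homega : forall i, (i < p)%nat -> 0 < omega i)
  (Homega1 : sumR p omega = 1)
  (Hb : forall j, (j < n)%nat -> 0 < b j)
  (Hpi : forall j, (j < n)%nat -> 0 < pi j)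
  (Hpi1 : sumR n pi = 1)
  (Hastar : is_max_of p a astar)
  (Hbstar : is_max_of n b bstar)
  (* mu : compactly supported probability measure on [0,oo) whose support
     has right endpoint lamstar > 0 *)
  (Hlamstar : 0 < lamstar)
  (Hmu : prob_measure_on mu lamstar)
  (Hsupp : in_support mu lamstar lamstar)
  (* master equations *)
  (He_smooth : smooth_on_ray lamstar e)
  (He_pole : forall lam, lamstar < lam ->
     forall j, (j < n)%nat -> 1 + gamma * b j * e lam <> 0)
  (He_den : forall lam, lamstar < lam ->
     forall i, (i < p)%nat -> a i * Gfun gamma n b pi (e lam) <> lam)
  (He_s : forall lam, lamstar < lam ->
     stieltjes mu lam =
       sumR p (fun i => omega i / (a i * Gfun gamma n b pi (e lam) - lam)))
  (He_F : forall lam, lamstar < lam ->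
     Ffun gamma p a omega n b pi lam (e lam) = 0) :
  forall lam, lamstar < lam ->
    exists r1 r2 d1 d2 : R,
      r1 < r2 /\ r2 < 0 /\
      in_I gamma n b pi astar bstar lam r1 /\
      in_I gamma n b pi astar bstar lam r2 /\
      Ffun gamma p a omega n b pi lam r1 = 0 /\
      Ffun gamma p a omega n b pi lam r2 = 0 /\
      (forall r, in_I gamma n b pi astar bstar lam r ->
         Ffun gamma p a omega n b pi lam r = 0 -> r = r1 \/ r = r2) /\
      e lam = r2 /\
      derivable_pt_lim (fun x => Ffun gamma p a omega n b pi lam x) r1 d1 /\
      derivable_pt_lim (fun x => Ffun gamma p a omega n b pi lam x) r2 d2 /\
      d1 <= 0 /\ 0 < d2.
Proof.
 assert (HS: Setup gamma p a omega n b pi astar bstar) by (unfold Setup; tauto).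
 pose proof (astar_pos _ _ _ _ _ _ _ _ _ HS) as Has. pose proof (bstar_pos _ _ _ _ _ _ _ _ _ HS) as Hbs.
 pose proof Hastar as [[ka [Hka Hka']] _]. pose proof Hbstar as [[kb [Hkb Hkb']] _]. pose proof Hgamma as Hg.
 destruct He_smooth as [d [Hd0 Hd]].
 set (ee := d O).
 assert (Hee: forall x, lamstar < x -> ee x = e x) by (intros; apply Hd0; auto).
 assert (Hcee: forall x, lamstar < x -> continuity_pt ee x) by (intros x Hx; eapply dpl_cont; apply (Hd O x Hx)).
 assert (Hpole: forall l, lamstar < l -> forall j, (j<n)%nat -> 1 + gamma * b j * ee l <> 0)
   by (intros; rewrite Hee; auto).
 assert (Hden: forall l, lamstar < l -> forall i, (i<p)%nat -> a i * Gfun gamma n b pi (ee l) - l <> 0).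
 { intros l Hl i Hi. rewrite Hee by auto. specialize (He_den l Hl i Hi). lra. }
 assert (HcG: forall l, lamstar < l -> continuity_pt (fun l => Gfun gamma n b pi (ee l)) l).
 { intros l Hl. apply (continuity_pt_comp ee (Gfun gamma n b pi)). auto. apply cont_G_nz. apply Hpole; auto. }
 set (lam0 := 2 * lamstar + 4 * gamma * astar * bstar + (2 * astar * bstar + 2 * astar * bstar * (gamma + 1))).
 assert (Hq1: 0 < 4 * gamma * astar * bstar) by (repeat apply Rmult_lt_0_compat; lra).
 assert (Hq2: 0 < 2 * astar * bstar + 2 * astar * bstar * (gamma + 1)).
 { assert (0 < 2*astar*bstar) by nra. assert (0 < 2*astar*bstar*(gamma+1)) by (apply Rmult_lt_0_compat; lra). lra. }
 assert (Hl0: lamstar < lam0) by (unfold lam0; lra).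
 assert (Hgood0: in_I gamma n b pi astar bstar lam0 (e lam0) /\ 0 < Fp gamma p a omega n b pi lam0 (e lam0)).
 { apply large_good; [exact HS| unfold lam0; lra | unfold lam0; lra |].
   apply (e_bound gamma p a omega n b pi astar bstar); auto. lra.
   rewrite (GE_identity gamma p a omega n b pi astar bstar lam0 (e lam0) (stieltjes mu lam0)); auto.
   eapply Rle_trans. apply (mu_bound mu lamstar lam0); auto.
   apply (Rmult_le_reg_r (lam0 - lamstar)). lra. unfold Rdiv. rewrite Rmult_assoc, Rinv_l by lra. unfold lam0; lra. }
 destruct Hgood0 as [HI0 HFp0].
 assert (HP: forall l, lamstar < l -> 0 < 1 + gamma * bstar * ee l).
 { apply (sign_persist _ lamstar lam0); auto.
   intros x Hx. apply cpt_plus. apply cpt_const. apply cpt_mult. apply cpt_const. auto.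
   intros x Hx. rewrite <- Hkb'. apply Hpole; auto.
   rewrite Hee by auto. apply inJ_iff; auto. apply HI0. }
 assert (HQ: forall l, lamstar < l -> 0 < l - astar * Gfun gamma n b pi (ee l)).
 { apply (sign_persist _ lamstar lam0); auto.
   intros x Hx. apply cpt_minus. apply cpt_id. apply cpt_mult. apply cpt_const. auto.
   intros x Hx. rewrite <- Hka'. specialize (Hden x Hx ka Hka). lra.
   rewrite Hee by auto. pose proof (inI_den _ _ _ _ _ _ _ _ _ _ _ HS HI0 ka Hka). rewrite Hka' in H. lra. }
 assert (HA: forall l, lamstar < l -> in_I gamma n b pi astar bstar l (e l)).
 { intros l Hl. rewrite <- Hee by auto. split. apply inJ_iff; auto.
   specialize (HQ l Hl). apply (Rmult_lt_reg_l astar); auto. field_simplify; lra. }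
 assert (HB: forall l, lamstar < l -> Fp gamma p a omega n b pi l (ee l) <> 0).
 { intros l0 Hl0' HF0. rewrite Hee in HF0 by auto.
   set (l' := (lamstar + l0) / 2).
   assert (Hl': lamstar < l') by (unfold l'; lra). assert (Hl'0: l' < l0) by (unfold l'; lra).
   pose proof (crit_nonneg _ _ _ _ _ _ _ _ _ _ _ HS (HA l0 Hl0') (He_F l0 Hl0') HF0) as Hnn.
   destruct (F_lam _ _ _ _ _ _ _ _ _ l0 l' (e l') HS (HA l' Hl') Hl'0) as [HI' HFl].
   specialize (Hnn _ HI'). rewrite (He_F l' Hl') in HFl. lra. }
 assert (HC: forall l, lamstar < l -> 0 < Fp gamma p a omega n b pi l (ee l)).
 { apply (sign_persist _ lamstar lam0); auto.
   2: rewrite Hee by auto; auto.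
   intros x Hx. unfold Fp. apply cpt_plus. apply cpt_const.
   apply (sumR_cont p (fun i l => a i * a i * omega i * Gp gamma n b pi (ee l) / (a i * Gfun gamma n b pi (ee l) - l) ^ 2)).
   intros i Hi. apply cpt_div.
   apply cpt_mult. apply cpt_const. apply (continuity_pt_comp ee (Gp gamma n b pi)). auto. apply cont_Gp_nz. apply Hpole; auto.
   apply cpt_sq. apply cpt_minus. apply cpt_mult. apply cpt_const. apply HcG; auto. apply cpt_id.
   apply pow_nonzero. apply Hden; auto. }
 intros lam Hlam.
 pose proof (HC lam Hlam) as HCl. rewrite Hee in HCl by auto.
 destruct (two_roots _ _ _ _ _ _ _ _ _ lam (e lam) HS (HA lam Hlam) (He_F lam Hlam) HCl)
   as [r1 [d1 [H1 [H2 [H3 [H4 [H5 [H6 H7]]]]]]]].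
 exists r1, (e lam), d1, (Fp gamma p a omega n b pi lam (e lam)).
 refine (conj H1 (conj H2 (conj H3 (conj (HA lam Hlam) (conj H4 (conj (He_F lam Hlam) (conj H5 (conj eq_refl (conj H6 (conj _ (conj H7 HCl))))))))))).
 apply (F_deriv_I gamma p a omega n b pi astar bstar); auto.
Qed.
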